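(* The system below has an equilibrium of the form $G_3=(S^*,I_1^*,0,0,R^* )$ with $S^*,I_1^*,R^*>0$ if and only if $S^{**}>\sigma_1$ (equivalently $K>K^*:=\frac{b\sigma_1}{b-\mu_0}$), and in that case it is unique. Moreover, writing $\hat S_1=S^{**}-\sigma_1$, its components satisfy $$S^*+I_1^*=\sigma_1,\qquad I_1^*=\frac{b}{K\alpha_1}(\hat S_1-R^* )=\frac{(\mu_4'-\mu_0)R^*}{\alpha_1R^*+\rho_1},$$ and $R^*$ is the unique root in $(0,\hat S_1)$ of $$f(R,K)=\Big(\hat S_1-R+\tfrac{K}{b}(\mu_0-\mu_4')\Big)R+\frac{\rho_1}{\alpha_1}(\hat S_1-R)=0.$$
   Context: Consider, for $t\ge0$, the system $S'=\big(b(1-\tfrac{N}{K})-\alpha_1I_1-\alpha_2I_2-(\beta_1+\beta_2+\alpha_3)I_{12}-\mu_0\big)S$, $I_1'=\big(b(1-\tfrac{N}{K})+\alpha_1S-\eta_1I_{12}-\gamma_1I_2-\mu_1\big)I_1+\beta_1SI_{12}$, $I_2'=\big(b(1-\tfrac{N}{K})+\alpha_2S-\eta_2I_{12}-\gamma_2I_1-\mu_2\big)I_2+\beta_2SI_{12}$, $I_{12}'=\big(b(1-\tfrac{N}{K})+\alpha_3S+\eta_1I_1+\eta_2I_2-\mu_3\big)I_{12}+(\gamma_1+\gamma_2)I_1I_2$, $R'=\big(b(1-\tfrac{N}{K})-\mu_4'\big)R+\rho_1I_1+\rho_2I_2+\rho_3I_{12}$, where $N=S+I_1+I_2+I_{12}+R$.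 All parameters $b,K,\alpha_i,\beta_i,\gamma_i,\eta_i,\rho_i,\mu_0,\mu_i'$ are positive and $\mu_i=\rho_i+\mu_i'$ for $i=1,2,3$. Standing assumptions: $b>\mu_0$, $b>\mu_i$ ($i=1,2,3$), $b>\mu_4'$, and $\mu_0<\mu_4'<\mu_j'$ for $j=1,2,3$. Set $\sigma_k=(\mu_k-\mu_0)/\alpha_k$ ($k=1,2,3$), assumed to satisfy $\sigma_1<\sigma_2<\sigma_3$, and $S^{**}=\frac{K}{b}(b-\mu_0)$. *)

(* Defs.v *)
From mathcomp Require Import all_boot all_order all_algebra.
Set Implicit Arguments. Unset Strict Implicit. Unset Printing Implicit Defensive.
Import Order.TTheory GRing.Theory Num.Theory.
Local Open Scope ring_scope.

Record params (R : realFieldType) := Params {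
  b : R; K : R;
  alpha1 : R; alpha2 : R; alpha3 : R;
  beta1 : R; beta2 : R;
  gamma1 : R; gamma2 : R;
  eta1 : R; eta2 : R;
  rho1 : R; rho2 : R; rho3 : R;
  mu0 : R; mu1p : R; mu2p : R; mu3p : R; mu4p : R }.

Section Model.
Variables (R : realFieldType) (p : params R).

Definition mu1 := rho1 p + mu1p p.
Definition mu2 := rho2 p + mu2p p.
Definition mu3 := rho3 p + mu3p p.

Definition sigma1 := (mu1 - mu0 p) / alpha1 p.
Definition sigma2 := (mu2 - mu0 p) / alpha2 p.
Definition sigma3 := (mu3 - mu0 p) / alpha3 p.

Definition Sss := K p / b p * (b p - mu0 p).
Definition Kstar := b p * sigma1 / (b p - mu0 p).
Definition S1hat := Sss - sigma1.

(* The right-hand sides of the ODE system at state (S, I1, I2, I12, Rr). *)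
Definition logi S I1 I2 I12 Rr := b p * (1 - (S + I1 + I2 + I12 + Rr) / K p).

Definition fS S I1 I2 I12 Rr :=
  (logi S I1 I2 I12 Rr - alpha1 p * I1 - alpha2 p * I2
    - (beta1 p + beta2 p + alpha3 p) * I12 - mu0 p) * S.
Definition fI1 S I1 I2 I12 Rr :=
  (logi S I1 I2 I12 Rr + alpha1 p * S - eta1 p * I12 - gamma1 p * I2 - mu1) * I1
  + beta1 p * S * I12.
Definition fI2 S I1 I2 I12 Rr :=
  (logi S I1 I2 I12 Rr + alpha2 p * S - eta2 p * I12 - gamma2 p * I1 - mu2) * I2
  + beta2 p * S * I12.
Definition fI12 S I1 I2 I12 Rr :=
  (logi S I1 I2 I12 Rr + alpha3 p * S + eta1 p * I1 + eta2 p * I2 - mu3) * I12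
  + (gamma1 p + gamma2 p) * I1 * I2.
Definition fR S I1 I2 I12 Rr :=
  (logi S I1 I2 I12 Rr - mu4p p) * Rr + rho1 p * I1 + rho2 p * I2 + rho3 p * I12.

Definition is_equilibrium S I1 I2 I12 Rr :=
  [/\ fS S I1 I2 I12 Rr = 0, fI1 S I1 I2 I12 Rr = 0, fI2 S I1 I2 I12 Rr = 0,
      fI12 S I1 I2 I12 Rr = 0 & fR S I1 I2 I12 Rr = 0].

Definition is_G3 S I1 Rr :=
  [/\ 0 < S, 0 < I1, 0 < Rr & is_equilibrium S I1 0 0 Rr].

Definition fRK Rr :=
  (S1hat - Rr + K p / b p * (mu0 p - mu4p p)) * Rr + rho1 p / alpha1 p * (S1hat - Rr).

Definition standing :=
  (0 < b p /\ 0 < K p /\ 0 < alpha1 p /\ 0 < alpha2 p /\ 0 < alpha3 p /\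
   0 < beta1 p /\ 0 < beta2 p /\ 0 < gamma1 p /\ 0 < gamma2 p /\
   0 < eta1 p /\ 0 < eta2 p /\ 0 < rho1 p /\ 0 < rho2 p /\ 0 < rho3 p /\
   0 < mu0 p /\ 0 < mu1p p /\ 0 < mu2p p /\ 0 < mu3p p /\ 0 < mu4p p) /\
  (mu0 p < b p /\ mu1 < b p /\ mu2 < b p /\ mu3 < b p /\ mu4p p < b p) /\
  (mu0 p < mu4p p /\ mu4p p < mu1p p /\ mu4p p < mu2p p /\ mu4p p < mu3p p) /\
  (sigma1 < sigma2 /\ sigma2 < sigma3).

End Model.

(* Main.v *)
Require Import Defs.
From mathcomp Require Import all_boot all_order all_algebra.
From mathcomp Require Import ring lra.
Import Order.TTheory GRing.Theory Num.Theory.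
Local Open Scope ring_scope.
Set Implicit Arguments. Unset Strict Implicit.
Ltac fld := field; do ?[apply/andP; split]; first [done | rewrite gt_eqF //; lra].

Lemma quad_uniq (F : realFieldType) (B C r r' : F) : 0 < C -> 0 < r -> 0 < r' ->
  - r^+2 + B*r + C = 0 -> - r'^+2 + B*r' + C = 0 -> r = r'.
Proof.
move=> hC hr hr' e1 e2.
have : (r - r') * (B - r - r') = (- r^+2 + B*r + C) - (- r'^+2 + B*r' + C) by ring.
rewrite e1 e2 subrr => /eqP; rewrite mulf_eq0 => /orP [/eqP h | /eqP h].
  by apply/eqP; rewrite -subr_eq0; apply/eqP.
have hB : B = r + r' by lra.
have : 0 < r * r' by rewrite mulr_gt0.
rewrite hB in e1. nra.
Qed.

Lemma quad_root (F : rcfType) (B C a : F) : 0 < C -> 0 < a -> -a^+2 + B*a + C < 0 ->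
  exists x, [/\ 0 < x, x < a & -x^+2 + B*x + C = 0].
Proof.
move=> hC ha hf.
have hD : 0 <= B^+2 + 4 * C by nra.
set s := Num.sqrt (B^+2 + 4 * C).
have hs : s^+2 = B^+2 + 4 * C by rewrite sqr_sqrtr.
have hs0 : 0 <= s by rewrite sqrtr_ge0.
have hpos : 0 < B + s by nra.
have hneg : B - s < 0 by nra.
exists ((B + s)/2); split.
- lra.
- rewrite ltNge; apply/negP => h.
  have h1: 0 <= ((B+s)/2 - a) * (a - (B-s)/2) by apply: mulr_ge0; lra.
  nra.
- have -> : - ((B + s) / 2) ^+ 2 + B * ((B + s) / 2) + C = (B^+2 + 4 * C - s^+2)/4 by fld.
  by rewrite hs subrr mul0r.
Qed.
Lemma G3_char (R : rcfType) (p : params R) S I1 Rr :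
  is_G3 p S I1 Rr <->
  [/\ 0 < S, 0 < I1, 0 < Rr & [/\
      b p * (1 - (S + I1 + Rr) / K p) = alpha1 p * I1 + mu0 p,
      b p * (1 - (S + I1 + Rr) / K p) = mu1 p - alpha1 p * S &
      (b p * (1 - (S + I1 + Rr) / K p) - mu4p p) * Rr + rho1 p * I1 = 0]].
Proof.
rewrite /is_G3 /is_equilibrium /fS /fI1 /fI2 /fI12 /fR /logi !(addr0, mulr0, subr0, mul0r).
split.
- case=> hS hI hR [e1 e2 _ _ e3]; split=> //; split.
  + move/eqP: e1; rewrite mulf_eq0 (gt_eqF hS) orbF subr_eq0 => /eqP h; lra.
  + move/eqP: e2; rewrite mulf_eq0 (gt_eqF hI) orbF subr_eq0 => /eqP h; lra.
  + exact: e3.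
- case=> hS hI hR [e1 e2 e3]; split=> //; split=> //.
  + have -> : b p * (1 - (S + I1 + Rr) / K p) - alpha1 p * I1 - mu0 p = 0 by lra.
    by rewrite mul0r.
  + have -> : b p * (1 - (S + I1 + Rr) / K p) + alpha1 p * S - mu1 p = 0 by lra.
    by rewrite mul0r.
Qed.

Lemma stand_facts (R : rcfType) (p : params R) : standing p ->
  [/\ 0 < b p, 0 < K p, 0 < alpha1 p, 0 < rho1 p &
   [/\ 0 < mu0 p, mu0 p < b p, mu0 p < mu4p p & mu4p p < mu1 p]].
Proof.
move=> [A [B [C _]]].
case: A => hb [hK [ha1 [_ [_ [_ [_ [_ [_ [_ [_ [hr1 A]]]]]]]]]]].
case: A => _ [_ [hm0 _]].
case: B => hbm0 _. case: C => h04 [h41 _].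
split=> //; split=> //; rewrite /mu1; lra.
Qed.

Definition Bq {R : rcfType} (p : params R) :=
  S1hat p + K p / b p * (mu0 p - mu4p p) - rho1 p / alpha1 p.
Definition Cq {R : rcfType} (p : params R) := rho1 p / alpha1 p * S1hat p.

Lemma fRK_quad (R : rcfType) (p : params R) r : fRK p r = - r^+2 + Bq p * r + Cq p.
Proof. rewrite /fRK /Bq /Cq; ring. Qed.

Lemma root_uniq (R : rcfType) (p : params R) r r' : standing p ->
  0 < S1hat p -> 0 < r -> 0 < r' -> fRK p r = 0 -> fRK p r' = 0 -> r = r'.
Proof.
move=> /stand_facts [hb hK ha1 hr1 _] hS hr hr'; rewrite !fRK_quad => e1 e2.
apply: (@quad_uniq _ _ _ _ _ _ hr hr' e1 e2).
by rewrite /Cq !mulr_gt0 // invr_gt0.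
Qed.

Lemma G3_props (R : rcfType) (p : params R) S I1 Rr : standing p -> is_G3 p S I1 Rr ->
         [/\ S + I1 = sigma1 p,
             I1 = b p / (K p * alpha1 p) * (S1hat p - Rr),
             I1 = (mu4p p - mu0 p) * Rr / (alpha1 p * Rr + rho1 p),
             (0 < Rr /\ Rr < S1hat p /\ fRK p Rr = 0)
           & forall Rr', 0 < Rr' -> Rr' < S1hat p -> fRK p Rr' = 0 -> Rr' = Rr].
Proof.
move=> hst /G3_char [hS hI hR [e1 e2 e3]].
have [hb hK ha1 hr1 [hm0 hbm0 h04 h41]] := stand_facts hst.
have nb : b p != 0 by rewrite gt_eqF.
have nK : K p != 0 by rewrite gt_eqF.
have na1 : alpha1 p != 0 by rewrite gt_eqF.
have hsum : S + I1 = sigma1 p.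
  have h : alpha1 p * (S + I1) = mu1 p - mu0 p by lra.
  rewrite /sigma1 -h; by fld.
have F2 : I1 = b p / (K p * alpha1 p) * (S1hat p - Rr).
  have -> : b p / (K p * alpha1 p) * (S1hat p - Rr)
      = (b p * (1 - (S + I1 + Rr) / K p) - mu0 p) / alpha1 p.
    rewrite /S1hat /Sss -hsum; by fld.
  rewrite e1; by fld.
have hden : 0 < alpha1 p * Rr + rho1 p by rewrite addr_gt0 // mulr_gt0.
have h3 : I1 * (alpha1 p * Rr + rho1 p) = (mu4p p - mu0 p) * Rr.
  rewrite e1 in e3; lra.
have F3 : I1 = (mu4p p - mu0 p) * Rr / (alpha1 p * Rr + rho1 p).
  by rewrite -h3 mulfK // gt_eqF.
have h2' : S1hat p - Rr = K p * alpha1 p / b p * I1 by rewrite F2; by fld.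
have hlt : Rr < S1hat p.
  by rewrite -subr_gt0 h2' !mulr_gt0 // invr_gt0.
have hf : fRK p Rr = 0.
  rewrite /fRK h2'.
  have -> : (K p * alpha1 p / b p * I1 + K p / b p * (mu0 p - mu4p p)) * Rr +
      rho1 p / alpha1 p * (K p * alpha1 p / b p * I1)
      = K p / b p * (I1 * (alpha1 p * Rr + rho1 p) - (mu4p p - mu0 p) * Rr) by fld.
  by rewrite h3 subrr mulr0.
split=> //.
move=> r' hr' _ hf'.
apply: (root_uniq hst _ hr' hR hf' hf); lra.
Qed.

Lemma G3_exists (R : rcfType) (p : params R) : standing p -> 0 < S1hat p ->
  exists S I1 Rr, is_G3 p S I1 Rr.
Proof.
move=> hst hSh.
have [hb hK ha1 hr1 [hm0 hbm0 h04 h41]] := stand_facts hst.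
have nb : b p != 0 by rewrite gt_eqF.
have nK : K p != 0 by rewrite gt_eqF.
have na1 : alpha1 p != 0 by rewrite gt_eqF.
have hC : 0 < Cq p by rewrite /Cq !mulr_gt0 // invr_gt0.
have hfa : - S1hat p ^+ 2 + Bq p * S1hat p + Cq p < 0.
  rewrite -fRK_quad /fRK subrr add0r mulr0 addr0.
  have : 0 < K p / b p * (mu4p p - mu0 p) * S1hat p.
    by rewrite !mulr_gt0 // ?invr_gt0 // subr_gt0.
  lra.
have [x [hx0 hxa hx]] := quad_root hC hSh hfa.
rewrite -fRK_quad in hx.
have hden : 0 < alpha1 p * x + rho1 p by rewrite addr_gt0 // mulr_gt0.
have nden : alpha1 p * x + rho1 p != 0 by rewrite gt_eqF.
have [I1 hI1] : exists I1, I1 = (mu4p p - mu0 p) * x / (alpha1 p * x + rho1 p) by eexists.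
have hI : I1 * (alpha1 p * x + rho1 p) = (mu4p p - mu0 p) * x by rewrite hI1 divfK.
have hI0 : 0 < I1 by rewrite hI1 divr_gt0 // mulr_gt0 // subr_gt0.
have hsh : S1hat p - x = K p * alpha1 p / b p * I1.
  apply: (mulIf nden).
  have e : (S1hat p - x) * (alpha1 p * x + rho1 p)
     = alpha1 p * fRK p x + K p * alpha1 p / b p * ((mu4p p - mu0 p) * x) by rewrite /fRK; fld.
  by rewrite e hx mulr0 add0r -hI mulrA.
have hsig : alpha1 p * sigma1 p = mu1 p - mu0 p by rewrite /sigma1; fld.
have hs0 : 0 < sigma1 p by rewrite /sigma1 divr_gt0 // subr_gt0; lra.
have hIs : I1 < sigma1 p.
  rewrite hI1 ltr_pdivrMr //.
  have hx1 : alpha1 p * sigma1 p * x = (mu1 p - mu0 p) * x by rewrite hsig.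
  have : 0 < sigma1 p * rho1 p by rewrite mulr_gt0.
  have : 0 < (mu1 p - mu4p p) * x by rewrite mulr_gt0 // subr_gt0.
  lra.
have ha1I : alpha1 p * I1 = b p / K p * (S1hat p - x) by rewrite hsh; fld.
have E1 : b p * (1 - (sigma1 p - I1 + I1 + x) / K p) = alpha1 p * I1 + mu0 p.
  rewrite ha1I /S1hat /Sss; fld.
exists (sigma1 p - I1), I1, x; apply/G3_char; split=> //.
  by rewrite subr_gt0.
split=> //.
  rewrite E1; lra.
rewrite E1; lra.
Qed.

Theorem mainTheorem7 (R : rcfType) (p : params R) :
  standing p ->
  [/\ (exists S I1 Rr, is_G3 p S I1 Rr) <-> sigma1 p < Sss p,
      sigma1 p < Sss p <-> Kstar p < K p,
      (forall S I1 Rr S' I1' Rr', is_G3 p S I1 Rr -> is_G3 p S' I1' Rr' ->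
         [/\ S = S', I1 = I1' & Rr = Rr'])
    & (forall S I1 Rr, is_G3 p S I1 Rr ->
         [/\ S + I1 = sigma1 p,
             I1 = b p / (K p * alpha1 p) * (S1hat p - Rr),
             I1 = (mu4p p - mu0 p) * Rr / (alpha1 p * Rr + rho1 p),
             (0 < Rr /\ Rr < S1hat p /\ fRK p Rr = 0)
           & forall Rr', 0 < Rr' -> Rr' < S1hat p -> fRK p Rr' = 0 -> Rr' = Rr])].
Proof.
move=> hst.
have [hb hK ha1 hr1 [hm0 hbm0 h04 h41]] := stand_facts hst.
split.
- split.
  + move=> [S [I1 [Rr /(G3_props hst) [_ _ _ [hR [hlt _]] _]]]].
    rewrite /S1hat in hlt; lra.
  + move=> h; apply: G3_exists => //; rewrite /S1hat; lra.
- have -> : Sss p = K p * (b p - mu0 p) / b p by rewrite /Sss; fld.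
  rewrite /Kstar ltr_pdivlMr // ltr_pdivrMr ?subr_gt0 //.
  by rewrite [sigma1 p * b p]mulrC.
- move=> S I1 Rr S' I1' Rr' h h'.
  have [s1 f2 _ [hR [hlt hf]] u] := G3_props hst h.
  have [s1' f2' _ [hR' [hlt' hf']] u'] := G3_props hst h'.
  have eR : Rr = Rr' by apply: u'.
  have eI : I1 = I1' by rewrite f2 f2' eR.
  split=> //.
  lra.
- by move=> S I1 Rr; apply: G3_props.
Qed.
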